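(* Let $P\in\mathsf{AST}$. For a rational $0<\delta<1$ and a scheduler $f$, call the smallest $k\in\mathbb{N}$ satisfying $\sum_{\tau\in T_{\le k}(P,f)}\mathrm{Prob}(\tau)>\delta$ the required simulation time to cross $\delta$ for $f$. Then, for each such $\delta$, the set of required simulation times to cross $\delta$ over all schedulers $f$ has an upper bound.
   Context: pGCL. Fix a countable set $\mathrm{Var}$ of variables taking rational values. Programs are generated by $P ::= \bot \mid v:=e \mid P;P \mid P\oplus_p P \mid P\,[\!]\,P \mid \mathtt{while}(b)\{P\}$ ($v\in\mathrm{Var}$, $e,p$ arithmetical expressions, $b$ boolean expression, $\bot$ the empty program; $\oplus_p$ probabilistic choice, $[\!]$ nondeterministic choice). A valuation is $\eta:\mathrm{Var}\to\mathbb{Q}$. A scheduler is a total function $f:\{L_n,R_n,L_p,R_p\}^*\to\{L_n,R_n\}$; $\mathbb{F}$ is the set of schedulers. An execution state is $(P,\eta,a,w)$ with $a\in\mathbb{Q}\cap(0,1]$, $w\in\{L_n,R_n,L_p,R_p\}^*$; states with program $\bot$ are terminal. For $f\in\mathbb{F}$, $\to_f$ is the smallest relation with: $(v:=e,\eta,a,w)\to_f(\bot,\eta[v\mapsto[\![e]\!]_\eta],a,w)$; if $(P_1,\eta,a,w)\to_f(P_1',\eta',a',w')$ then $(P_1;P_2,\eta,a,w)\to_f(P_1';P_2,\eta',a',w')$; $(\bot;P_2,\eta,a,w)\to_f(P_2,\eta,a,w)$; $(P_1\oplus_pP_2,\eta,a,w)\to_f(P_2,\eta,a,wR_p)$ if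 $[\![p]\!]_\eta\le0$, $\to_f(P_1,\eta,a,wL_p)$ if $[\![p]\!]_\eta\ge1$, and if $0<[\![p]\!]_\eta<1$ both $\to_f(P_1,\eta,a[\![p]\!]_\eta,wL_p)$ and $\to_f(P_2,\eta,a(1-[\![p]\!]_\eta),wR_p)$; $(P_1[\!]P_2,\eta,a,w)\to_f(P_1,\eta,a,wL_n)$ if $f(w)=L_n$, $\to_f(P_2,\eta,a,wR_n)$ if $f(w)=R_n$; $(\mathtt{while}(b)\{P\},\eta,a,w)\to_f(P;\mathtt{while}(b)\{P\},\eta,a,w)$ if $b$ holds, else $\to_f(\bot,\eta,a,w)$. $\to_f^n$ ($n\ge1$) is the $n$-fold composition, $\to_f^*=\bigcup_{n\ge1}\to_f^n$. The initial execution state of $P$ is $(P,\eta_0,1,\varepsilon)$, $\eta_0\equiv0$. $\mathrm{Prob}((P,\eta,a,w))=a$. $T_{\le k}(P,f)$ is the set of terminal execution states $\tau$ with $(P,\eta_0,1,\varepsilon)\to_f^n\tau$ for some $n\le k$. $\Pr_{\mathrm{term}}(P,f)=\sum\mathrm{Prob}(\tau)$ over all terminal $\tau$ with $(P,\eta_0,1,\varepsilon)\to_f^*\tau$. $\mathsf{AST}$ is the set of programs $P$ with $\Pr_{\mathrm{term}}(P,f)=1$ for every scheduler $f$. *)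

(* Defs.v *)
From HB Require Import structures.
From mathcomp Require Import all_boot all_order all_algebra.
From mathcomp Require Import all_classical all_reals.
From mathcomp Require Import ereal esum.
From mathcomp Require Import Rstruct.
Set Implicit Arguments. Unset Strict Implicit. Unset Printing Implicit Defensive.
Import Order.TTheory GRing.Theory Num.Theory.
Local Open Scope ring_scope.
Local Open Scope classical_set_scope.

Definition var := nat.
Definition valuation := var -> rat.
Definition eta0 : valuation := fun _ => 0.
Definition upd (eta : valuation) (v : var) (q : rat) : valuation :=
  fun x => if x == v then q else eta x.

Inductive aexp : Type :=
| AConst of rat
| AVar of var
| AAdd of aexp & aexp
| ASub of aexp & aexp
| AMul of aexp & aexp.

Fixpoint aeval (eta : valuation) (e : aexp) : rat :=
  match e with
  | AConst q => q
  | AVar v => eta v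
  | AAdd e1 e2 => aeval eta e1 + aeval eta e2
  | ASub e1 e2 => aeval eta e1 - aeval eta e2
  | AMul e1 e2 => aeval eta e1 * aeval eta e2
  end.

Inductive bexp : Type :=
| BTrue | BFalse
| BLe of aexp & aexp
| BLt of aexp & aexp
| BEq of aexp & aexp
| BNot of bexp
| BAnd of bexp & bexp
| BOr of bexp & bexp.

Fixpoint beval (eta : valuation) (b : bexp) : bool :=
  match b with
  | BTrue => true
  | BFalse => false
  | BLe e1 e2 => aeval eta e1 <= aeval eta e2
  | BLt e1 e2 => aeval eta e1 < aeval eta e2
  | BEq e1 e2 => aeval eta e1 == aeval eta e2
  | BNot b => ~~ beval eta b
  | BAnd b1 b2 => beval eta b1 && beval eta b2
  | BOr b1 b2 => beval eta b1 || beval eta b2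
  end.

Inductive prog : Type :=
| PBot
| PAssign of var & aexp
| PSeq of prog & prog
| PProb of aexp & prog & prog
| PNondet of prog & prog
| PWhile of bexp & prog.

Inductive letter : Type := Ln | Rn | Lp | Rp.
Definition history := seq letter.

Inductive ndir : Type := NL | NR.
Definition scheduler := history -> ndir.

Record state : Type := St {
  st_prog : prog; st_val : valuation; st_prob : rat; st_hist : history }.

Definition terminal (s : state) : Prop := st_prog s = PBot.
Definition Prob (s : state) : rat := st_prob s.

Inductive step (f : scheduler) : state -> state -> Prop :=
| step_assign v e eta a w :
    step f (St (PAssign v e) eta a w) (St PBot (upd eta v (aeval eta e)) a w)
| step_seq P1 P2 eta a w P1' eta' a' w' :
    step f (St P1 eta a w) (St P1' eta' a' w') ->
    step f (St (PSeq P1 P2) eta a w) (St (PSeq P1' P2) eta' a' w')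
| step_seq_bot P2 eta a w :
    step f (St (PSeq PBot P2) eta a w) (St P2 eta a w)
| step_prob_le0 p P1 P2 eta a w :
    aeval eta p <= 0 ->
    step f (St (PProb p P1 P2) eta a w) (St P2 eta a (rcons w Rp))
| step_prob_ge1 p P1 P2 eta a w :
    1 <= aeval eta p ->
    step f (St (PProb p P1 P2) eta a w) (St P1 eta a (rcons w Lp))
| step_prob_L p P1 P2 eta a w :
    0 < aeval eta p < 1 ->
    step f (St (PProb p P1 P2) eta a w)
           (St P1 eta (a * aeval eta p) (rcons w Lp))
| step_prob_R p P1 P2 eta a w :
    0 < aeval eta p < 1 ->
    step f (St (PProb p P1 P2) eta a w)
           (St P2 eta (a * (1 - aeval eta p)) (rcons w Rp))
| step_nd_L P1 P2 eta a w :
    f w = NL ->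
    step f (St (PNondet P1 P2) eta a w) (St P1 eta a (rcons w Ln))
| step_nd_R P1 P2 eta a w :
    f w = NR ->
    step f (St (PNondet P1 P2) eta a w) (St P2 eta a (rcons w Rn))
| step_while_t b P eta a w :
    beval eta b ->
    step f (St (PWhile b P) eta a w) (St (PSeq P (PWhile b P)) eta a w)
| step_while_f b P eta a w :
    ~~ beval eta b ->
    step f (St (PWhile b P) eta a w) (St PBot eta a w).

Inductive nsteps (f : scheduler) : nat -> state -> state -> Prop :=
| nsteps1 s t : step f s t -> nsteps f 1 s t
| nstepsS n s u t : step f s u -> nsteps f n u t -> nsteps f n.+1 s t.

Definition init (P : prog) : state := St P eta0 1 [::].

Definition T_le (k : nat) (P : prog) (f : scheduler) : set {classic state} :=
  [set t | terminal t /\ exists2 n, (1 <= n <= k)%N & nsteps f n (init P) t].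

Definition T_all (P : prog) (f : scheduler) : set {classic state} :=
  [set t | terminal t /\ exists2 n, (1 <= n)%N & nsteps f n (init P) t].

Definition sumProb (S : set {classic state}) : \bar Rdefinitions.R :=
  (\esum_(t in S) ((ratr (Prob t) : Rdefinitions.R)%:E))%E.

Definition Pr_term (P : prog) (f : scheduler) : \bar Rdefinitions.R :=
  sumProb (T_all P f).

Definition AST (P : prog) : Prop := forall f : scheduler, Pr_term P f = 1%E.

Definition req_time (P : prog) (delta : rat) (f : scheduler) (k : nat) : Prop :=
  ((ratr delta : Rdefinitions.R)%:E < sumProb (T_le k P f))%E /\
  forall j : nat, (j < k)%N ->
    ~ ((ratr delta : Rdefinitions.R)%:E < sumProb (T_le j P f))%E.

(* Main.v *)
Require Import Defs.
From HB Require Import structures.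
From mathcomp Require Import all_boot all_order all_algebra.
From mathcomp Require Import all_classical all_reals.
From mathcomp Require Import ereal esum.
From mathcomp Require Import Rstruct.
From mathcomp Require Import zify.
From Stdlib Require Import Classical.
Set Implicit Arguments. Unset Strict Implicit. Unset Printing Implicit Defensive.
Import Order.TTheory GRing.Theory Num.Theory.
Local Open Scope classical_set_scope.

Lemma size_step f s t : step f s t -> (size (st_hist t) <= (size (st_hist s)).+1)%N.
Proof. by elim=> //= *; rewrite ?size_rcons. Qed.

Lemma step_ext f g s t : step f s t -> f (st_hist s) = g (st_hist s) -> step g s t.
Proof.
elim=> /=; intros; try (constructor; by auto).
- by constructor; rewrite -H0.
- by constructor; rewrite -H0.
Qed.

Lemma nsteps_ext f g m s t : nsteps f m s t ->
  (forall w, (size w < size (st_hist s) + m)%N -> f w = g w) -> nsteps g m s t.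
Proof.
elim=> {m s t} [s t st|m s u t st _ IH] H.
  by constructor; apply: step_ext st _; apply: H; rewrite addn1.
apply: (nstepsS (u := u)).
  by apply: step_ext st _; apply: H; lia.
apply: IH => w hw; apply: H; have := size_step st; lia.
Qed.

Lemma T_le_ext n P f g : (forall w, (size w < n)%N -> f w = g w) ->
  T_le n P f = T_le n P g.
Proof.
move=> H; apply/seteqP; split=> t [tt [m hm hs]]; split=> //; exists m => //;
 apply: nsteps_ext hs _ => w /= hw; [|symmetry]; apply: H; lia.
Qed.

Lemma sumProb_mono (S S' : set {classic state}) : S `<=` S' -> (sumProb S <= sumProb S')%E.
Proof.
move=> H; apply: ereal_sup_le => x [A [fA AS] <-]; exists A => //; split => //.
exact: subset_trans AS H.
Qed.

Lemma T_le_mono n m P f : (n <= m)%N -> T_le n P f `<=` T_le m P f.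
Proof. move=> nm t [tt [k hk hs]]; split=> //; exists k => //; lia. Qed.

Definition dig (x : letter) : nat :=
  match x with Ln => 1 | Rn => 2 | Lp => 3 | Rp => 4 end.

Fixpoint code (w : history) : nat :=
  match w with [::] => 0 | x :: w' => dig x + 5 * code w' end.

Lemma dig_bnd x : (1 <= dig x <= 4)%N. Proof. by case: x. Qed.

Lemma code_inj : injective code.
Proof.
elim=> [|x w IH] [|y v] //=.
- by have := dig_bnd y; lia.
- by have := dig_bnd x; lia.
move=> h.
have hx := dig_bnd x; have hy := dig_bnd y.
have e1 : dig x = dig y by lia.
have e2 : code w = code v by lia.
by rewrite (IH _ e2); case: x y e1 {h hx hy} => [] [].
Qed.

Lemma code_bnd w : (code w < 5 ^ size w)%N.
Proof.
elim: w => [|x w IH] //=; rewrite expnS; have := dig_bnd x; lia.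
Qed.

Section Compact.
Variable Bad : nat -> scheduler -> Prop.
Hypothesis mono : forall n m f, (n <= m)%N -> Bad m f -> Bad n f.
Hypothesis loc : forall n f g, (forall w, (size w < n)%N -> f w = g w) -> Bad n f -> Bad n g.
Hypothesis hyp : forall n, exists f, Bad n f.

Definition Good k (g : scheduler) := forall n, exists f : scheduler,
  (forall w, (code w < k)%N -> f w = g w) /\ Bad n f.

Definition updk k (g : scheduler) d : scheduler := fun w => if code w == k then d else g w.

Fixpoint G k : scheduler :=
  match k with
  | 0 => fun _ => NL
  | k'.+1 => if `[< Good k'.+1 (updk k' (G k') NL) >] then updk k' (G k') NL
             else updk k' (G k') NR
  end.

Lemma agree_upd k (f g : scheduler) d : (forall w, (code w < k)%N -> f w = g w) ->
  (forall w, code w = k -> f w = d) -> forall w, (code w < k.+1)%N -> f w = updk k g d w.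
Proof.
move=> h1 h2 w hw; rewrite /updk; case: eqP => [/h2 //|ne]; apply: h1; lia.
Qed.

Lemma Good_G k : Good k (G k).
Proof.
elim: k => [|k IH] /=.
  by move=> n; have [f hf] := hyp n; exists f; split.
case: asboolP => // hNL.
apply: NNPP => hNR.
have [n1 h1] := not_all_ex_not _ _ hNL.
have [n2 h2] := not_all_ex_not _ _ hNR.
have h1' := not_ex_all_not _ _ h1; have h2' := not_ex_all_not _ _ h2.
have [f [hfa hfb]] := IH (maxn n1 n2).
have B1 : Bad n1 f by apply: mono hfb; lia.
have B2 : Bad n2 f by apply: mono hfb; lia.
case: (classic (exists w0, code w0 = k)) => [[w0 hw0]|nw].
  have hc : forall w, code w = k -> f w = f w0.
    by move=> w hw; rewrite (code_inj (etrans hw (esym hw0))).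
  case E: (f w0).
    by apply: (h1' f); split=> //; apply: agree_upd => // w /hc; rewrite E.
  by apply: (h2' f); split=> //; apply: agree_upd => // w /hc; rewrite E.
apply: (h1' f); split=> //; apply: agree_upd => // w hw; case: nw; by exists w.
Qed.

Lemma G_stable j w : (code w < j)%N -> G j w = G (code w).+1 w.
Proof.
elim: j => [//|j IH] hj.
case: (ltnP (code w) j) => hwj.
  rewrite -IH //= ; case: asboolP => _; rewrite /updk; case: eqP => //; lia.
by have -> : j = code w by lia.
Qed.

Lemma compact_sched : exists f, forall n, Bad n f.
Proof.
exists (fun w => G (code w).+1 w) => n.
have [f [hf hb]] := Good_G (5 ^ n) n.
apply: loc hb => w hw.
have hc : (code w < 5 ^ n)%N.
  apply: leq_trans (code_bnd w) _; apply: leq_pexp2l => //; lia.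
by rewrite hf // G_stable.
Qed.
End Compact.

Lemma seq_bound P f (s : seq {classic state}) :
  (forall t, t \in s -> T_all P f t) -> exists N, forall t, t \in s -> T_le N P f t.
Proof.
elim: s => [|x s IH] H; first by exists 0%N.
have [N hN] := IH (fun t ht => H t ltac:(by rewrite inE ht orbT)).
have [tx [m hm hs]] := H x (mem_head _ _).
exists (maxn N m) => t; rewrite inE => /orP [/eqP ->|ht].
  by split=> //; exists m => //; lia.
by apply: T_le_mono (hN t ht); lia.
Qed.

Lemma Pr_le P f (d : Rdefinitions.R) :
  (forall n, ~ (d%:E < sumProb (T_le n P f))%E) -> (Pr_term P f <= d%:E)%E.
Proof.
move=> H; apply: ge_ereal_sup => x [A [fA AS] <-].
have [s hs] := (finite_seqP A).1 fA.
have [N hN] := seq_bound (P := P) (f := f) (s := s) (fun t ht => AS t ltac:(by rewrite hs)).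
apply: (@le_trans _ _ (sumProb (T_le N P f))).
  apply: ereal_sup_ubound; exists A => //; split => // t; rewrite hs; exact: hN.
by rewrite leNgt; apply/negP; apply: H.
Qed.

Unset Implicit Arguments.
Theorem lemmaB3 (P : prog) (hP : AST P) (delta : rat)
  (hd0 : (0 < delta)%R) (hd1 : (delta < 1)%R) :
  exists B : nat, forall (f : scheduler) (k : nat),
    req_time P delta f k -> (k <= B)%N.
Proof.
set d : Rdefinitions.R := ratr delta.
have [N hN] : exists N, forall f, (d%:E < sumProb (T_le N P f))%E.
  apply: NNPP => hno.
  have hyp : forall n, exists f, ~ (d%:E < sumProb (T_le n P f))%E.
    by move=> n; apply: not_all_ex_not; apply: (not_ex_all_not _ _ hno n).
  have mono : forall n m f, (n <= m)%N -> ~ (d%:E < sumProb (T_le m P f))%E ->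
      ~ (d%:E < sumProb (T_le n P f))%E.
    move=> n m f nm h1 h2; apply: h1; apply: (lt_le_trans h2).
    exact/sumProb_mono/T_le_mono.
  have loc : forall n f g, (forall w, (size w < n)%N -> f w = g w) ->
      ~ (d%:E < sumProb (T_le n P f))%E -> ~ (d%:E < sumProb (T_le n P g))%E.
    by move=> n f g h; rewrite (T_le_ext P h).
  have [f hf] := compact_sched mono loc hyp.
  have := Pr_le hf; rewrite (hP f) lee_fin /d -(rmorph1 (ratr : rat -> Rdefinitions.R)).
  by rewrite ler_rat leNgt hd1.
exists N => f k [hk1 hk2]; rewrite leqNgt; apply/negP => lt.
exact: hk2 N lt (hN f).
Qed.
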